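(* Elements of $\mathcal{C}_2$ cannot in general be reparametrized to elements of $\mathcal{C}_1$: there exist an input space $\mathcal{X}$ with associated graphs, a label set $\mathcal{L}$, fixed unary and pairwise features, and a weight vector $w_1\in\mathcal{C}_2$ such that no $w_2\in\mathcal{C}_1$ is a reparametrization of $w_1$, i.e. for every $w_2\in\mathcal{C}_1$ there is some $x\in\mathcal{X}$ with $\arg\max_{y\in\mathcal{Y}} w_1^\top\psi(x,y)\neq \arg\max_{y\in\mathcal{Y}} w_2^\top\psi(x,y)$.
   Context: Pairwise CRF model. Each input $x\in\mathcal{X}$ comes with a finite graph with vertices $\mathcal{V}_x=(x^k)_k$ and undirected edges $\mathcal{E}_x$. An output $y\in\mathcal{Y}$ is a labeling $(y^k)_k\in\mathcal{L}^{|\mathcal{V}_x|}$ with a finite label set $\mathcal{L}$. Unary features $\phi_u(x^k)\in\mathbb{R}^{d_u}$ and pairwise features $\phi_p(x^k,x^l)\in\mathbb{R}^{d_p}$ are fixed. The weight vector $w$ consists of unary weights $w_\alpha\in\mathbb{R}^{d_u}$ for each $\alpha\in\mathcal{L}$ and pairwise weights $w_{\alpha\beta}\in\mathbb{R}^{d_p}$ for each $(\alpha,\beta)\in\mathcal{L}^2$. The score is $w^\top\psi(x,y)=\sum_{x^k\in\mathcal{V}_x}\langle w_{y^k},\phi_u(x^k)\rangle+\sum_{\{x^k,x^l\}\in\mathcal{E}_x}\langle w_{y^ky^l},\phi_p(x^k,x^l)\rangle$ (equivalently, $\psi$ is built from Kronecker products of one-hot label encodings with the features). Constraint sets: $\mathcal{C}_1=\{w: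 w_{\alpha\alpha}=w_{\beta\beta}=0,\ w_{\alpha\beta}\le 0,\ w_{\beta\alpha}\le 0 \text{ (componentwise) for all } \alpha\neq\beta\in\mathcal{L}\}$ and $\mathcal{C}_2=\{w: w_{\alpha\alpha}\ge 0,\ w_{\beta\beta}\ge 0,\ w_{\alpha\beta}\le 0,\ w_{\beta\alpha}\le 0 \text{ (componentwise) for all } \alpha\neq\beta\in\mathcal{L}\}$. A weight vector $w_1$ is reparametrizable into $w_2$ if $\arg\max_{y\in\mathcal{Y}} w_1^\top\psi(x,y)=\arg\max_{y\in\mathcal{Y}} w_2^\top\psi(x,y)$ for all $x\in\mathcal{X}$; the features are held fixed and only the weights change. *)

(* Defs.v *)
From HB Require Import structures.
From mathcomp Require Import all_boot all_order all_algebra.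
From mathcomp Require Import Rstruct.
Notation R := Rdefinitions.R.
Set Implicit Arguments. Unset Strict Implicit. Unset Printing Implicit Defensive.
Import Order.TTheory GRing.Theory Num.Theory.
Local Open Scope ring_scope.

(* A pairwise CRF model: input space X, per-input finite graph with vertices
   'I_(nv x) and undirected edges (stored once, oriented as (k,l) with k < l),
   a finite label set L, fixed unary features in R^du and pairwise features
   in R^dp. *)
Record crf_model := CRFModel {
  X : Type;
  nv : X -> nat;
  edges : forall x : X, {set 'I_(nv x) * 'I_(nv x)};
  edges_ok : forall (x : X) (e : 'I_(nv x) * 'I_(nv x)),
      e \in edges x -> (nat_of_ord e.1 < nat_of_ord e.2)%N;
  L : finType;
  du : nat;
  dp : nat;
  phi_u : forall x : X, 'I_(nv x) -> 'I_du -> R;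
  phi_p : forall x : X, 'I_(nv x) -> 'I_(nv x) -> 'I_dp -> R
}.

Record weight (M : crf_model) := Weight {
  w_u : L M -> 'I_(du M) -> R;
  w_p : L M -> L M -> 'I_(dp M) -> R
}.

Definition dotv (d : nat) (a b : 'I_d -> R) : R := \sum_(i < d) a i * b i.

Definition labeling (M : crf_model) (x : X M) := {ffun 'I_(nv x) -> L M}.

(* The score w^T psi(x,y). *)
Definition score (M : crf_model) (w : weight M) (x : X M) (y : labeling x) : R :=
  \sum_(k < nv x) dotv (w_u w (y k)) (phi_u k)
  + \sum_(e in edges x) dotv (w_p w (y e.1) (y e.2)) (phi_p e.1 e.2).

Definition argmax (M : crf_model) (w : weight M) (x : X M) : {set labeling x} :=
  [set y | [forall y' : labeling x, score w y' <= score w y]].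

Definition reparametrizable (M : crf_model) (w1 w2 : weight M) : Prop :=
  forall x : X M, argmax w1 x = argmax w2 x.

Definition inC1 (M : crf_model) (w : weight M) : Prop :=
  (forall (a : L M) (i : 'I_(dp M)), w_p w a a i = 0) /\
  (forall (a b : L M) (i : 'I_(dp M)), a != b -> w_p w a b i <= 0).

Definition inC2 (M : crf_model) (w : weight M) : Prop :=
  (forall (a : L M) (i : 'I_(dp M)), 0 <= w_p w a a i) /\
  (forall (a b : L M) (i : 'I_(dp M)), a != b -> w_p w a b i <= 0).

(* Main.v *)
Require Import Defs.
From mathcomp Require Import all_boot all_order all_algebra.
From mathcomp Require Import Rstruct.
Import Order.TTheory GRing.Theory Num.Theory.
Local Open Scope ring_scope.

Definition Xe : unit -> {set 'I_2 * 'I_2} := fun _ => [set (@ord0 1, @ord_max 1)].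

Lemma Xe_ok (x : unit) (e : 'I_2 * 'I_2) : e \in Xe x -> (nat_of_ord e.1 < nat_of_ord e.2)%N.
Proof. by rewrite inE => /eqP ->. Qed.

Definition Mex : crf_model :=
  @CRFModel unit (fun _ => 2%N) Xe Xe_ok bool 0%N 1%N
    (fun _ _ _ => 0) (fun _ _ _ _ => 1).

Lemma score_ex (w : weight Mex) (y : labeling (M:=Mex) tt) :
  score w y = w_p w (y ord0) (y ord_max) ord0.
Proof.
rewrite /score big1; last by move=> k _; rewrite /dotv big_ord0.
rewrite add0r /= /Xe big_set1 /dotv big_ord1 /= mulr1 //.
Qed.

Definition w1ex : weight Mex :=
  @Weight Mex (fun _ _ => 0) (fun a b _ => if a && b then 1 else 0).

Theorem proposition1 :
  exists (M : crf_model) (w1 : weight M),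
    inC2 w1 /\
    forall w2 : weight M, inC1 w2 ->
      exists x : X M, argmax w1 x <> argmax w2 x.
Proof.
exists Mex, w1ex; split.
  rewrite /inC2; split; first by move=> a i /=; case: (a && a).
  by move=> a b i; rewrite /w1ex /=; case: (a : bool) (b : bool) => [] [] /=; rewrite ?eqxx // ler10.
move=> w2; rewrite /inC1 => -[H0 _]; exists tt => Heq.
pose yT : labeling (M:=Mex) tt := [ffun _ => true].
pose yF : labeling (M:=Mex) tt := [ffun _ => false].
have hT : yT \in argmax w1ex tt.
  rewrite inE; apply/forallP => y; rewrite !score_ex /= !ffunE /=.
  by case: (y ord0 : bool); case: (y ord_max : bool) => //=; rewrite ler01.
have hF : yF \notin argmax w1ex tt.
  rewrite inE negb_forall; apply/existsP; exists yT.
  by rewrite !score_ex /= !ffunE /= -ltNge ltr01.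
move: hT hF; rewrite Heq !inE => /forallP hT /forallP []. 
move=> y; have := hT y; rewrite !score_ex !ffunE /=.
by rewrite (H0 true) (H0 false).
Qed.
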